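(* Let $2\le k<n$ and let $\{\mathcal{V}^I\}_I$ be a maximal set of pairwise compatible one-parameter arrays of type $(k,n)$ (a maximal clique), defining the facet $\mathcal{M}=\sum_I\alpha^I\mathcal{V}^I$, $\alpha^I>0$. For each $I$ let $\mathcal{V}^{*I}$ be the one-parameter array of type $(n-k,n)$ dual to $\mathcal{V}^I$. Then $\{\mathcal{V}^{*I}\}_I$ is a maximal set of pairwise compatible one-parameter arrays of type $(n-k,n)$ (a clique), and hence $\mathcal{M}^*:=\sum_I\alpha^I\mathcal{V}^{*I}$, $\alpha^I>0$, is a facet of type $(n-k,n)$, the dual facet of $\mathcal{M}$.
   Context: Labels carry the cyclic order $1<\cdots<n$. A planar Feynman diagram on a label set $L$ is a tree with leaves labelled by $L$, internal vertices of degree at least 3, planar for the induced cyclic order, with nonnegative internal edge lengths, giving a tree metric $d_{ab}$. For a label set $N$, $|N|=n$, $2\le k<n$, an array of type $(k,n)$ assigns to each $(k-2)$-subset $\{i_1,\ldots,i_{k-2}\}\subseteq N$ a planar Feynman diagram $\mathcal{V}_{i_1\ldots i_{k-2}}$ on $N\setminus\{i_1,\ldots,i_{k-2}\}$ with metric $d^{(i_1\ldots i_{k-2})}_{ab}$, such that $\pi_{i_1\ldots i_k}:=d^{(i_1\ldots i_{k-2})}_{i_{k-1}i_k}$ is totally symmetric. Metrics are considered modulo $\pi_I\sim\pi_I+\sum_{i\in I}w_i$. A one-parameter array has metric $xV$ for a fixed tensor $V$ and one parameter $x>0$. Two one-parameter arrays with tensors $V,W$ are compatible if for all $x,y>0$,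 $xV+yW$ is, up to $\sim$, the metric of an array of the same type. Sums of compatible arrays are taken at the level of metrics ($\sum_I\alpha^I V^I$); a facet is the array family obtained as such a positive sum over a maximal set of pairwise compatible one-parameter arrays. Kinematic invariants of type $(k,n)$ are reals $s_J$ for $k$-subsets $J\subseteq N$ with $\sum_{J\ni j}s_J=0$ for all $j$; for a one-parameter array with tensor $V$, $\mathcal{F}(\mathcal{V}):=\sum_{|J|=k}s_JV_J$. A one-parameter array $\mathcal{V}^*$ of type $(n-k,n)$ is dual to a one-parameter array $\mathcal{V}$ of type $(k,n)$ if $\mathcal{F}(\mathcal{V})=\mathcal{F}(\mathcal{V}^* )$ as functions on kinematic space under the identification $s_J\leftrightarrow s_{N\setminus J}$. *)

(* Defs.v *)
From HB Require Import structures.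
From mathcomp Require Import all_boot all_order all_algebra.
From mathcomp Require Import reals.
Set Implicit Arguments. Unset Strict Implicit. Unset Printing Implicit Defensive.
Import Order.TTheory GRing.Theory Num.Theory.
Local Open Scope ring_scope.

(* Labels are 'I_n = {0,...,n-1} with the cyclic order 0 < 1 < ... < n-1.
   A tensor of type (k,n) is a function on subsets of labels; only its values
   on k-subsets are ever used. *)

Section Arrays.
Variables (R : realType) (n : nat).

Definition tensor := {set 'I_n} -> R.

(* A (nontrivial) split A | L\A of the label set L is planar iff A is a cyclic
   interval of L for the induced cyclic order, i.e. A and L\A do not interleave. *)
Definition planar_split (L A : {set 'I_n}) : bool :=
  ~~ [exists a : 'I_n, exists b : 'I_n, exists c : 'I_n, exists d : 'I_n,
       [&& (a < b)%N, (b < c)%N, (c < d)%N,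
           [&& a \in L, b \in L, c \in L & d \in L] &
           [|| [&& a \in A, b \notin A, c \in A & d \notin A]
             | [&& a \notin A, b \in A, c \notin A & d \in A]]]].

(* Two splits of L are compatible (can be edges of a common tree). *)
Definition compatible_splits (L A B : {set 'I_n}) : bool :=
  [|| A :&: B == set0, A :\: B == set0, B :\: A == set0 | L :\: (A :|: B) == set0].

(* A planar Feynman diagram on L, described by its internal edges: each
   internal edge is recorded by the split (one side A of the bipartition of L
   it induces) together with its length.  Internal edges give nontrivial
   splits, planarity means every split is a cyclic interval, and edges of a
   tree give pairwise compatible splits. *)
Definition valid_diagram (L : {set 'I_n}) (E : seq ({set 'I_n} * R)) : Prop :=
  (forall e, e \in E ->
     [/\ e.1 \subset L, (2 <= #|e.1|)%N, (2 <= #|L :\: e.1|)%N,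
         planar_split L e.1 & 0 <= e.2]) /\
  (forall e f, e \in E -> f \in E -> compatible_splits L e.1 f.1).

(* Tree metric: sum of lengths of the edges on the path from a to b; leaf
   edges have lengths given by lf. *)
Definition tree_metric (E : seq ({set 'I_n} * R)) (lf : 'I_n -> R)
  (a b : 'I_n) : R :=
  if a == b then 0 else
  lf a + lf b + \sum_(e <- E) (if (a \in e.1) != (b \in e.1) then e.2 else 0).

Definition planar_diagram_metric (L : {set 'I_n}) (d : 'I_n -> 'I_n -> R) : Prop :=
  exists E lf, valid_diagram L E /\
    forall a b, a \in L -> b \in L -> a != b -> d a b = tree_metric E lf a b.

(* pi is the metric of an array of type (k,n): for every (k-2)-subset S, a planar
   Feynman diagram on N \ S with metric D S, and pi_{S u {a,b}} = (D S) a b,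
   which encodes total symmetry. *)
Definition is_array (k : nat) (pi : tensor) : Prop :=
  (2 <= k < n)%N /\
  exists D : {set 'I_n} -> 'I_n -> 'I_n -> R,
    (forall S : {set 'I_n}, #|S| = (k - 2)%N -> planar_diagram_metric (~: S) (D S)) /\
    (forall (S : {set 'I_n}) (a b : 'I_n), #|S| = (k - 2)%N ->
        a \notin S -> b \notin S -> a != b -> pi (a |: (b |: S)) = D S a b).

Definition array_equiv (k : nat) (pi pi' : tensor) : Prop :=
  exists w : 'I_n -> R, forall J : {set 'I_n}, #|J| = k ->
    pi' J = pi J + \sum_(i in J) w i.

Definition one_param (k : nat) (V : tensor) : Prop :=
  forall x : R, 0 < x -> is_array k (fun J => x * V J).

Definition compatible_arrays (k : nat) (V W : tensor) : Prop :=
  forall x y : R, 0 < x -> 0 < y ->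
    exists pi, is_array k pi /\ array_equiv k (fun J => x * V J + y * W J) pi.

Definition clique (k : nat) (C : tensor -> Prop) : Prop :=
  (forall V, C V -> one_param k V) /\
  (forall V W, C V -> C W -> compatible_arrays k V W).

Definition max_clique (k : nat) (C : tensor -> Prop) : Prop :=
  clique k C /\
  forall C' : tensor -> Prop, clique k C' -> (forall V, C V -> C' V) ->
    forall V, C' V -> C V.

Definition kinematic (k : nat) (s : tensor) : Prop :=
  forall j : 'I_n, \sum_(J : {set 'I_n} | (#|J| == k) && (j \in J)) s J = 0.

Definition dual_array (k : nat) (V W : tensor) : Prop :=
  forall s : tensor, kinematic k s ->
    \sum_(J : {set 'I_n} | #|J| == k) s J * V J =
    \sum_(K : {set 'I_n} | #|K| == (n - k)%N) s (~: K) * W K.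

End Arrays.

(* Main.v *)
Require Import Defs.
From HB Require Import structures.
From mathcomp Require Import all_boot all_order all_algebra.
From mathcomp Require Import reals.
From mathcomp Require Import ring lra zify.
Set Implicit Arguments. Unset Strict Implicit. Unset Printing Implicit Defensive.
Import Order.TTheory GRing.Theory Num.Theory.
Local Open Scope ring_scope.

Section B.
Variables (R : realType) (n : nat).
Implicit Types (L A B : {set 'I_n}) (d : 'I_n -> 'I_n -> R).

Definition fourpt (X A B : R) := A <= X /\ B <= X /\ (X = A \/ X = B).
Definition fp d (p q r s : 'I_n) :=
  fourpt (d p r + d q s) (d p q + d r s) (d p s + d q r).

Lemma planar_no (L A : {set 'I_n}) (p q r s : 'I_n) :
  planar_split L A -> (p < q)%N -> (q < r)%N -> (r < s)%N ->
  p \in L -> q \in L -> r \in L -> s \in L ->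
  ~~ [&& p \in A, q \notin A, r \in A & s \notin A] /\
  ~~ [&& p \notin A, q \in A, r \notin A & s \in A].
Proof.
move=> /negP H pq qr rs pL qL rL sL; split; apply/negP => H2; apply: H;
apply/existsP; exists p; apply/existsP; exists q; apply/existsP; exists r;
apply/existsP; exists s; rewrite pq qr rs pL qL rL sL /=; move: H2; case: (p \in A); case: (q \in A); case: (r \in A); case: (s \in A). all: by [].
Qed.

Definition tt_ (e : {set 'I_n} * R) (x y : 'I_n) : R :=
  if (x \in e.1) != (y \in e.1) then e.2 else 0.

Lemma compat_no L (A B : {set 'I_n}) x y z w :
  compatible_splits L A B -> x \in L -> y \in L -> z \in L -> w \in L ->
  x \in A -> x \in B -> y \in A -> y \notin B -> z \notin A -> z \in B ->
  w \notin A -> w \notin B -> False.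
Proof.
move=> /or4P [] /eqP H xL yL zL wL xA xB yA yB zA zB wA wB.
- by have := in_set0 x; rewrite -H inE xA xB.
- by have := in_set0 y; rewrite -H inE yA (negbTE yB).
- by have := in_set0 z; rewrite -H inE zB (negbTE zA).
- by have := in_set0 w; rewrite -H !inE (negbTE wA) (negbTE wB) wL.
Qed.

Lemma compat_b L (A B : {set 'I_n}) x y z w :
  compatible_splits L A B -> x \in L -> y \in L -> z \in L -> w \in L ->
  ~~ [&& has (fun u => (u \in A) && (u \in B)) [:: x; y; z; w],
         has (fun u => (u \in A) && (u \notin B)) [:: x; y; z; w],
         has (fun u => (u \notin A) && (u \in B)) [:: x; y; z; w] &
         has (fun u => (u \notin A) && (u \notin B)) [:: x; y; z; w]].
Proof.
move=> H xL yL zL wL.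
have mL : forall u, u \in [:: x; y; z; w] -> u \in L.
  by move=> u; rewrite !inE => /or4P [] /eqP ->.
apply/negP => /and4P [/hasP [u1 /mL u1L /andP [h1 h2]] /hasP [u2 /mL u2L /andP [h3 h4]]
   /hasP [u3 /mL u3L /andP [h5 h6]] /hasP [u4 /mL u4L /andP [h7 h8]]].
exact: (compat_no H u1L u2L u3L u4L).
Qed.

Lemma fourpt_of (X A B SA SB : R) : X - A = SA -> X - B = SB -> SA * SB = 0 ->
  0 <= SA -> 0 <= SB -> fourpt X A B.
Proof.
move=> EA EB P0 gA gB; rewrite /fourpt; split; [lra|split; [lra|]].
move/eqP: P0; rewrite mulf_eq0 => /orP [] /eqP H; [left|right]; lra.
Qed.

Lemma tree_fp L E lf d (p q r s : 'I_n) :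
  valid_diagram L E ->
  (forall a b, a \in L -> b \in L -> a != b -> d a b = tree_metric E lf a b) ->
  (p < q)%N -> (q < r)%N -> (r < s)%N ->
  p \in L -> q \in L -> r \in L -> s \in L -> fp d p q r s.
Proof.
move=> [HE Hc] Hd pq qr rs pL qL rL sL.
have ne : forall a b : 'I_n, (a < b)%N -> a != b.
  by move=> a b ab; apply/eqP => E1; move: ab; rewrite E1 ltnn.
have Hm : forall a b, a \in L -> b \in L -> (a < b)%N ->
   d a b = lf a + lf b + \sum_(e <- E) tt_ e a b.
  move=> a b aL bL ab; rewrite Hd // ?ne // /tree_metric (negbTE (ne _ _ ab)).
  by [].
have pr : (p < r)%N by apply: ltn_trans qr.
have qs : (q < s)%N by apply: ltn_trans rs.
have ps : (p < s)%N by apply: ltn_trans qs.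
rewrite /fp !Hm //.
set tA := fun e => tt_ e p r + tt_ e q s - tt_ e p q - tt_ e r s.
set tB := fun e => tt_ e p r + tt_ e q s - tt_ e p s - tt_ e q r.
have EA : (lf p + lf r + \sum_(e <- E) tt_ e p r + (lf q + lf s + \sum_(e <- E) tt_ e q s))
  - (lf p + lf q + \sum_(e <- E) tt_ e p q + (lf r + lf s + \sum_(e <- E) tt_ e r s))
  = \sum_(e <- E) tA e.
  by rewrite /tA !sumrB !big_split /=; ring.
have EB : (lf p + lf r + \sum_(e <- E) tt_ e p r + (lf q + lf s + \sum_(e <- E) tt_ e q s))
  - (lf p + lf s + \sum_(e <- E) tt_ e p s + (lf q + lf r + \sum_(e <- E) tt_ e q r))
  = \sum_(e <- E) tB e.
  by rewrite /tB !sumrB !big_split /=; ring.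
have patA : forall e, e \in E -> tA e =
   if [&& (p \in e.1) == (q \in e.1), (r \in e.1) == (s \in e.1) & (p \in e.1) != (r \in e.1)]
   then 2 * e.2 else 0.
  move=> e eE; have [_ _ _ Hpl _] := HE e eE.
  have [N1 N2] := planar_no Hpl pq qr rs pL qL rL sL.
  move: N1 N2; rewrite /tA /tt_.
  by case: (p \in e.1); case: (q \in e.1); case: (r \in e.1); case: (s \in e.1) => //= _ _; ring.
have patB : forall e, e \in E -> tB e =
   if [&& (q \in e.1) == (r \in e.1), (p \in e.1) == (s \in e.1) & (p \in e.1) != (q \in e.1)]
   then 2 * e.2 else 0.
  move=> e eE; have [_ _ _ Hpl _] := HE e eE.
  have [N1 N2] := planar_no Hpl pq qr rs pL qL rL sL.
  move: N1 N2; rewrite /tB /tt_.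
  by case: (p \in e.1); case: (q \in e.1); case: (r \in e.1); case: (s \in e.1) => //= _ _; ring.
have gA : 0 <= \sum_(e <- E) tA e.
  rewrite big_seq; apply: sumr_ge0 => e eE; rewrite patA //.
  have [_ _ _ _ h] := HE e eE; case: ifP => _ //; lra.
have gB : 0 <= \sum_(e <- E) tB e.
  rewrite big_seq; apply: sumr_ge0 => e eE; rewrite patB //.
  have [_ _ _ _ h] := HE e eE; case: ifP => _ //; lra.
have P0 : (\sum_(e <- E) tA e) * (\sum_(f <- E) tB f) = 0.
  rewrite big_seq mulr_suml; apply: big1 => e eE.
  rewrite big_seq mulr_sumr; apply: big1 => f fE.
  rewrite patA // patB //.
  case: ifP => [/and3P [/eqP e1 /eqP e2 e3]|_]; last by rewrite mul0r.
  case: ifP => [/and3P [/eqP f1 /eqP f2 f3]|_]; last by rewrite mulr0.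
  exfalso; have Hef := Hc e f eE fE.
  have /= := compat_b Hef pL qL rL sL.
  move: e1 e2 e3 f1 f2 f3.
  case pe: (p \in e.1); case qe: (q \in e.1); case re: (r \in e.1); case se: (s \in e.1) => //= _ _ _;
  case pf: (p \in f.1); case qf: (q \in f.1); case rf: (r \in f.1); case sf: (s \in f.1) => //=.

exact: (fourpt_of EA EB P0 gA gB).
Qed.
End B.

Section Pos.
Variables (R : realType) (m : nat) (f : nat -> nat -> R).
Hypothesis fsym : forall i j, f i j = f j i.
Hypothesis fdiag : forall i, f i i = 0.

Definition FF i j := f i (if j == m then 0%N else j).
Definition cc i j := FF i j - FF i j.+1 - FF i.+1 j + FF i.+1 j.+1.
Definition inI (i j x : nat) := (i < x <= j)%N.
Definition sep i j a b := inI i j a != inI i j b.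
Definition DS (G : nat -> nat -> R) := \sum_(0 <= i < m) \sum_(i.+1 <= j < m) G i j.

Lemma FF_lt i j : (j < m)%N -> FF i j = f i j.
Proof. by move=> h; rewrite /FF ltn_eqF. Qed.
Lemma FF_m i : FF i m = f i 0.
Proof. by rewrite /FF eqxx. Qed.

Lemma sum0_nat (a b : nat) (G : nat -> R) :
  (forall j, (a <= j < b)%N -> G j = 0) -> \sum_(a <= j < b) G j = 0.
Proof. by move=> h; rewrite (eq_big_nat _ _ h) big1_eq. Qed.

Lemma inner_eq a b i : (a < b)%N -> (b < m)%N -> (i < m)%N ->
  \sum_(i.+1 <= j < m) (if sep i j a b then cc i j else 0) =
  (if (i < a)%N then \sum_(a <= j < b) cc i j else 0) +
  (if (a <= i < b)%N then \sum_(b <= j < m) cc i j else 0).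
Proof.
move=> ab bm im.
case: (ltnP i a) => ia /=.
- have h1 : (i.+1 <= a)%N by lia.
  have h2 : (a <= b)%N by lia.
  have h3 : (b <= m)%N by lia.
  have h4 : (a <= m)%N by lia.
  rewrite addr0 (big_cat_nat h1 h4) /= (big_cat_nat h2 h3) /=.
  rewrite sum0_nat; last first.
    move=> j hj; rewrite /sep /inI; have ->: (i < a <= j)%N = false by lia.
    by have ->: (i < b <= j)%N = false by lia.
  rewrite [X in _ + (_ + X)]sum0_nat; last first.
    move=> j hj; rewrite /sep /inI.
    have ->: (i < a <= j)%N = true by lia.
    by have ->: (i < b <= j)%N = true by lia.
  rewrite add0r addr0; apply: eq_big_nat => j hj; rewrite /sep /inI.
  have ->: (i < a <= j)%N = true by lia.
  by have ->: (i < b <= j)%N = false by lia.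
- case: (ltnP i b) => ib /=.
  + have h1 : (i.+1 <= b)%N by lia.
    have h3 : (b <= m)%N by lia.
    rewrite add0r (big_cat_nat h1 h3) /=.
    rewrite sum0_nat; last first.
      move=> j hj; rewrite /sep /inI; have ->: (i < a <= j)%N = false by lia.
      by have ->: (i < b <= j)%N = false by lia.
    rewrite add0r; apply: eq_big_nat => j hj; rewrite /sep /inI.
    have ->: (i < a <= j)%N = false by lia.
    by have ->: (i < b <= j)%N = true by lia.
  + rewrite addr0 sum0_nat // => j hj; rewrite /sep /inI.
    have ->: (i < a <= j)%N = false by lia.
    by have ->: (i < b <= j)%N = false by lia.
Qed.

Lemma ID_lt a b : (a < b)%N -> (b < m)%N ->
  2 * f a b = DS (fun i j => if sep i j a b then cc i j else 0).
Proof.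
move=> ab bm; rewrite /DS.
rewrite (eq_big_nat _ _ (F2 := fun i => (if (i < a)%N then \sum_(a <= j < b) cc i j else 0) +
  (if (a <= i < b)%N then \sum_(b <= j < m) cc i j else 0))); last first.
  by move=> i hi; apply: inner_eq => //; lia.
have h0a : (0 <= a)%N by [].
have ham : (a <= m)%N by lia.
have hab : (a <= b)%N by lia.
have hbm : (b <= m)%N by lia.
have SA : \sum_(0 <= i < m) (if (i < a)%N then \sum_(a <= j < b) cc i j else 0) =
   \sum_(0 <= i < a) \sum_(a <= j < b) cc i j.
  rewrite (big_cat_nat h0a ham) /= [X in _ + X]sum0_nat ?addr0; last first.
    by move=> i hi; have ->: (i < a)%N = false by lia.
  by apply: eq_big_nat => i hi; have ->: (i < a)%N = true by lia.
have SB : \sum_(0 <= i < m) (if (a <= i < b)%N then \sum_(b <= j < m) cc i j else 0) =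
   \sum_(a <= i < b) \sum_(b <= j < m) cc i j.
  rewrite (big_cat_nat h0a ham) /= [X in X + _]sum0_nat ?add0r; last first.
    by move=> i hi; have ->: (a <= i < b)%N = false by lia.
  rewrite (big_cat_nat hab hbm) /= [X in _ + X]sum0_nat ?addr0; last first.
    by move=> i hi; have ->: (a <= i < b)%N = false by lia.
  by apply: eq_big_nat => i hi; have ->: (a <= i < b)%N = true by lia.
rewrite big_split /= SA SB.
rewrite (eq_big_nat _ _ (F2 := fun i => (FF i.+1 b - FF i b) - (FF i.+1 a - FF i a))); last first.
  move=> i hi.
  apply: (telescope_sumr_eq (fun j => FF i.+1 j - FF i j)) => //.
  by move=> k hk; rewrite /cc; ring.
rewrite [X in _ = _ + X](eq_big_nat _ _ (F2 := fun i => (FF i.+1 m - FF i m) - (FF i.+1 b - FF i b))); last first.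
  move=> i hi.
  apply: (telescope_sumr_eq (fun j => FF i.+1 j - FF i j)) => //.
  by move=> k hk; rewrite /cc; ring.
rewrite (telescope_sumr_eq (fun i => FF i b - FF i a)) //; last by move=> k hk; ring.
rewrite (telescope_sumr_eq (fun i => FF i m - FF i b)) //; last by move=> k hk; ring.
rewrite !FF_m !(FF_lt _ bm) !(FF_lt _ (ltn_trans ab bm)).
rewrite !fdiag (fsym b 0) (fsym a 0); ring.
Qed.

Lemma sep_sym i j a b : sep i j a b = sep i j b a.
Proof. by rewrite /sep eq_sym. Qed.

Lemma ID a b : a != b -> (a < m)%N -> (b < m)%N ->
  2 * f a b = DS (fun i j => if sep i j a b then cc i j else 0).
Proof.
move=> nab am bm; case: (ltngtP a b) => h.
- exact: ID_lt.
- rewrite fsym ID_lt //; apply: eq_bigr => i _; apply: eq_bigr => j _; by rewrite sep_sym.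
- by rewrite h eqxx in nab.
Qed.


Lemma DS_lin G1 G2 G3 G4 : DS G1 + DS G2 - DS G3 - DS G4 =
  DS (fun i j => G1 i j + G2 i j - G3 i j - G4 i j).
Proof.
rewrite /DS -big_split -!sumrB; apply: eq_bigr => i _.
by rewrite -big_split -!sumrB.
Qed.

Lemma if_mul (b : bool) (c : R) : (if b then c else 0) = c * b%:R.
Proof. by case: b; rewrite ?mulr1 ?mulr0. Qed.

Definition tA p q r s i j : R :=
  (sep i j p r)%:R + (sep i j q s)%:R - (sep i j p q)%:R - (sep i j r s)%:R.
Definition tB p q r s i j : R :=
  (sep i j p r)%:R + (sep i j q s)%:R - (sep i j p s)%:R - (sep i j q r)%:R.

Lemma QA p q r s : (p < q)%N -> (q < r)%N -> (r < s)%N -> (s < m)%N ->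
  2 * ((f p r + f q s) - (f p q + f r s)) = DS (fun i j => cc i j * tA p q r s i j).
Proof.
move=> pq qr rs sm.
have ne : forall x y, (x < y)%N -> x != y by move=> x y h; apply/eqP => E; move: h; rewrite E ltnn.
rewrite (_ : 2 * ((f p r + f q s) - (f p q + f r s)) =
   2 * f p r + 2 * f q s - 2 * f p q - 2 * f r s); last by ring.
rewrite !ID ?ne //; try lia.
rewrite DS_lin /DS; apply: eq_bigr => i _; apply: eq_bigr => j _.
by rewrite !if_mul /tA; ring.
Qed.

Lemma QB p q r s : (p < q)%N -> (q < r)%N -> (r < s)%N -> (s < m)%N ->
  2 * ((f p r + f q s) - (f p s + f q r)) = DS (fun i j => cc i j * tB p q r s i j).
Proof.
move=> pq qr rs sm.
have ne : forall x y, (x < y)%N -> x != y by move=> x y h; apply/eqP => E; move: h; rewrite E ltnn.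
rewrite (_ : 2 * ((f p r + f q s) - (f p s + f q r)) =
   2 * f p r + 2 * f q s - 2 * f p s - 2 * f q r); last by ring.
rewrite !ID ?ne //; try lia.
rewrite DS_lin /DS; apply: eq_bigr => i _; apply: eq_bigr => j _.
by rewrite !if_mul /tB; ring.
Qed.

Lemma tA_pat p q r s i j : (p < q)%N -> (q < r)%N -> (r < s)%N ->
  tA p q r s i j = if [&& inI i j p == inI i j q, inI i j r == inI i j s & inI i j p != inI i j r]
                   then 2 else 0.
Proof.
move=> pq qr rs; rewrite /tA /sep.
case Hp: (inI i j p); case Hq: (inI i j q); case Hr: (inI i j r); case Hs: (inI i j s) => /=;
  rewrite /inI in Hp Hq Hr Hs; try lia; ring.
Qed.

Lemma tB_pat p q r s i j : (p < q)%N -> (q < r)%N -> (r < s)%N ->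
  tB p q r s i j = if [&& inI i j q == inI i j r, inI i j p == inI i j s & inI i j p != inI i j q]
                   then 2 else 0.
Proof.
move=> pq qr rs; rewrite /tB /sep.
case Hp: (inI i j p); case Hq: (inI i j q); case Hr: (inI i j r); case Hs: (inI i j s) => /=;
  rewrite /inI in Hp Hq Hr Hs; try lia; ring.
Qed.


Definition triv i j := (j == i.+1) || ((i == 0%N) && (j == m.-1)).

Hypothesis H4 : forall p q r s, (p < q)%N -> (q < r)%N -> (r < s)%N -> (s < m)%N ->
  fourpt (f p r + f q s) (f p q + f r s) (f p s + f q r).

Lemma cc_ge0 i j : (i < j)%N -> (j < m)%N -> ~~ triv i j -> 0 <= cc i j.
Proof.
move=> ij jm; rewrite /triv negb_or => /andP [h1 h2].
have h3 : (i.+1 < j)%N by lia.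
case: (ltnP j.+1 m) => hj.
- have [_ [HB _]] := H4 (ltnSn i) h3 (ltnSn j) hj.
  rewrite /cc !FF_lt //; try lia; lra.
- have ejm : j.+1 = m by lia.
  have i0 : (0 < i)%N by lia.
  have [HA _] := H4 i0 (ltnSn i) h3 jm.
  rewrite /cc ejm !FF_m !FF_lt //; try lia.
  rewrite (fsym i 0) (fsym i.+1 0); lra.
Qed.

Lemma tA_triv p q r s i j : (p < q)%N -> (q < r)%N -> (r < s)%N -> (s < m)%N ->
  (i < j)%N -> (j < m)%N -> triv i j -> tA p q r s i j = 0.
Proof.
move=> pq qr rs sm ij jm; rewrite tA_pat // /triv /inI => /orP [/eqP -> | /andP [/eqP -> /eqP ->]].
- case: ifP => // /and3P [/eqP h1 /eqP h2 h3]; exfalso.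
  move: h1 h2 h3; case Hp: (i < p <= i.+1)%N; case Hr: (i < r <= i.+1)%N => //= h1 h2 _; lia.
- case: ifP => // /and3P [/eqP h1 /eqP h2 h3]; exfalso.
  move: h1 h2 h3; have ->: (0 < r <= m.-1)%N = true by lia. have ->: (0 < q <= m.-1)%N = true by lia.
  move=> ->; by rewrite eqxx.
Qed.

Lemma tB_triv p q r s i j : (p < q)%N -> (q < r)%N -> (r < s)%N -> (s < m)%N ->
  (i < j)%N -> (j < m)%N -> triv i j -> tB p q r s i j = 0.
Proof.
move=> pq qr rs sm ij jm; rewrite tB_pat // /triv /inI => /orP [/eqP -> | /andP [/eqP -> /eqP ->]].
- case: ifP => // /and3P [/eqP h1 /eqP h2 h3]; exfalso.
  move: h1 h2 h3; case Hq: (i < q <= i.+1)%N; case Hp: (i < p <= i.+1)%N => //= h1 h2 _; lia.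
- case: ifP => // /and3P [/eqP h1 /eqP h2 h3]; exfalso.
  move: h1 h2 h3; have ->: (0 < s <= m.-1)%N = true by lia. have ->: (0 < q <= m.-1)%N = true by lia.
  move=> _ ->; by rewrite eqxx.
Qed.

Lemma termA_ge0 p q r s i j : (p < q)%N -> (q < r)%N -> (r < s)%N -> (s < m)%N ->
  (i < j)%N -> (j < m)%N -> 0 <= cc i j * tA p q r s i j.
Proof.
move=> pq qr rs sm ij jm; case: (boolP (triv i j)) => ht.
- by rewrite tA_triv // mulr0.
- apply: mulr_ge0; first exact: cc_ge0.
  by rewrite tA_pat //; case: ifP => _; lra.
Qed.

Lemma termB_ge0 p q r s i j : (p < q)%N -> (q < r)%N -> (r < s)%N -> (s < m)%N ->
  (i < j)%N -> (j < m)%N -> 0 <= cc i j * tB p q r s i j.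
Proof.
move=> pq qr rs sm ij jm; case: (boolP (triv i j)) => ht.
- by rewrite tB_triv // mulr0.
- apply: mulr_ge0; first exact: cc_ge0.
  by rewrite tB_pat //; case: ifP => _; lra.
Qed.

Lemma sum_ge_term (lo hi k : nat) (F : nat -> R) : (lo <= k < hi)%N ->
  (forall i, (lo <= i < hi)%N -> 0 <= F i) -> F k <= \sum_(lo <= i < hi) F i.
Proof.
move=> hk hF.
have h1 : (lo <= k)%N by lia.
have h2 : (k <= hi)%N by lia.
have h3 : (k < hi)%N by lia.
rewrite (big_cat_nat h1 h2) /= (big_ltn h3).
have g1 : 0 <= \sum_(lo <= i < k) F i.
  rewrite big_nat_cond; apply: sumr_ge0 => i /andP [hi' _]; apply: hF; lia.
have g2 : 0 <= \sum_(k.+1 <= i < hi) F i.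
  rewrite big_nat_cond; apply: sumr_ge0 => i /andP [hi' _]; apply: hF; lia.
lra.
Qed.

Lemma DS_ge (G : nat -> nat -> R) i0 j0 : (i0 < j0)%N -> (j0 < m)%N ->
  (forall i j, (i < j)%N -> (j < m)%N -> 0 <= G i j) -> G i0 j0 <= DS G.
Proof.
move=> ij jm hG; rewrite /DS.
apply: le_trans (_ : \sum_(i0.+1 <= j < m) G i0 j <= _).
  by apply: sum_ge_term; [lia | move=> j hj; apply: hG; lia].
apply: (sum_ge_term (F := fun i => \sum_(i.+1 <= j < m) G i j)); first lia.
move=> i hi; rewrite big_nat_cond; apply: sumr_ge0 => j /andP [hj _]; apply: hG; lia.
Qed.

Lemma no_cross i j i' j' : (i < i')%N -> (i' < j)%N -> (j < j')%N -> (j' < m)%N ->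
  0 < cc i j -> 0 < cc i' j' -> False.
Proof.
move=> h1 h2 h3 h4 c1 c2.
have p0 : (0 < i')%N by lia.
have hA := QA p0 h2 h3 h4.
have hB := QB p0 h2 h3 h4.
have gA : cc i' j' * tA 0 i' j j' i' j' <= DS (fun a b => cc a b * tA 0 i' j j' a b).
  apply: (DS_ge (G := fun a b => cc a b * tA 0 i' j j' a b)); [lia|lia|].
  by move=> a b ab bm; apply: termA_ge0.
have gB : cc i j * tB 0 i' j j' i j <= DS (fun a b => cc a b * tB 0 i' j j' a b).
  apply: (DS_ge (G := fun a b => cc a b * tB 0 i' j j' a b)); [lia|lia|].
  by move=> a b ab bm; apply: termB_ge0.
rewrite tA_pat // /inI in gA; rewrite tB_pat // /inI in gB.
move: gA gB; rewrite ltnn /=.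
have ->: (i' < j <= j')%N = true by lia.
have ->: (i' < j' <= j')%N = true by lia.
have ->: (i < i' <= j)%N = true by lia.
have ->: (i < j <= j)%N = true by lia.
have ->: (i < j' <= j)%N = false by lia.
rewrite /= => gA gB.
have [_ [_ HH]] := H4 p0 h2 h3 h4.
case: HH => HH; lra.
Qed.

End Pos.

Section C.
Variables (R : realType) (n : nat).

Lemma enum_filter (L : {set 'I_n}) : enum L = [seq x <- enum 'I_n | x \in L].
Proof. by rewrite -!deprecated_filter_index_enum filter_predT. Qed.

Lemma DS_ext m (G1 G2 : nat -> nat -> R) :
  (forall i j, (i < j)%N -> (j < m)%N -> G1 i j = G2 i j) -> DS m G1 = DS m G2.
Proof.
move=> h; rewrite /DS; apply: eq_big_nat => i hi; apply: eq_big_nat => j hj; apply: h; lia.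
Qed.

Lemma DS_add3 m (G1 G2 G3 : nat -> nat -> R) :
  DS m G1 + DS m G2 + DS m G3 = DS m (fun i j => G1 i j + G2 i j + G3 i j).
Proof. by rewrite /DS -!big_split; apply: eq_bigr => i _; rewrite -!big_split. Qed.

Lemma fp_tree (L : {set 'I_n}) (d : 'I_n -> 'I_n -> R) :
  (4 <= #|L|)%N ->
  (forall a b, a \in L -> b \in L -> d a b = d b a) ->
  (forall p q r s : 'I_n, (p < q)%N -> (q < r)%N -> (r < s)%N ->
     p \in L -> q \in L -> r \in L -> s \in L -> fp d p q r s) ->
  planar_diagram_metric L d.
Proof.
move=> hL dsym Hfp.
have [x0 x0L] : exists x0, x0 \in L.
  by apply/card_gt0P; lia.
set s0 := [seq x <- enum 'I_n | x \in L].
set m := size s0.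
have Em : #|L| = m by rewrite /m cardE enum_filter.
set sg := fun i => nth x0 s0 i.
set pos := fun x => index x s0.
have memS : forall x, (x \in s0) = (x \in L) by move=> x; rewrite mem_filter mem_enum andbT.
have uS : uniq s0 by rewrite filter_uniq // enum_uniq.
have sgL : forall i, sg i \in L.
  move=> i; rewrite /sg; case: (ltnP i m) => h; first by rewrite -memS mem_nth.
  by rewrite nth_default.
have posm : forall x, x \in L -> (pos x < m)%N by move=> x; rewrite -memS /pos /m index_mem.
have sgpos : forall x, x \in L -> sg (pos x) = x by move=> x xL; rewrite /sg /pos nth_index // memS.
have possg : forall i, (i < m)%N -> pos (sg i) = i by move=> i h; rewrite /pos /sg index_uniq.
have srt : sorted (fun x y : 'I_n => (x < y)%N) s0.
  apply: sorted_filter; first by move=> x y z; apply: ltn_trans.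
  by have := iota_ltn_sorted 0 n; rewrite -val_enum_ord sorted_map.
have sgmono : forall i j, (i < j)%N -> (j < m)%N -> (sg i < sg j)%N.
  move=> i j ij jm; rewrite /sg; apply: (sorted_ltn_nth (leT := fun x y : 'I_n => (x < y)%N)) => //.
  - by move=> x y z; apply: ltn_trans.
  - exact: (ltn_trans ij jm).
have posmono : forall x y, x \in L -> y \in L -> (x < y)%N -> (pos x < pos y)%N.
  move=> x y xL yL xy; case: (ltngtP (pos x) (pos y)) => // h.
  - have := sgmono _ _ h (posm _ xL); rewrite !sgpos //; lia.
  - by move: (congr1 sg h); rewrite !sgpos // => E; move: xy; rewrite E ltnn.
set f := fun i j => if i == j then 0 else d (sg i) (sg j).
have fsym : forall i j, f i j = f j i.
  by move=> i j; rewrite /f eq_sym; case: eqP => // _; apply: dsym.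
have fdiag : forall i, f i i = 0 by move=> i; rewrite /f eqxx.
have ne : forall x y : nat, (x < y)%N -> (x == y) = false by move=> x y h; apply/eqP => E; move: h; rewrite E ltnn.
have H4 : forall p q r s, (p < q)%N -> (q < r)%N -> (r < s)%N -> (s < m)%N ->
    fourpt (f p r + f q s) (f p q + f r s) (f p s + f q r).
  move=> p q r s pq qr rs sm.
  have := Hfp (sg p) (sg q) (sg r) (sg s).
  rewrite /fp /f !ne; try lia.
  apply; rewrite ?sgL //; apply: sgmono; lia.
set P := [seq (i, j) | i <- index_iota 0 m, j <- index_iota i.+1 m].
set keep := fun ij : nat * nat => ~~ triv m ij.1 ij.2 && (0 < cc m f ij.1 ij.2).
set A := fun i j => [set x in L | inI i j (pos x)].
set E := [seq (A ij.1 ij.2, cc m f ij.1 ij.2 / 2) | ij <- P & keep ij].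
set ind := fun i j x => if j == i.+1 then x == j else x == 0%N.
set lf := fun x => DS m (fun i j => if triv m i j && ind i j (pos x) then cc m f i j else 0) / 2.
have memP : forall ij, ij \in P -> (ij.1 < ij.2)%N && (ij.2 < m)%N.
  move=> ij /allpairsPdep [i [j [hi hj ->]]] /=; move: hi hj; rewrite !mem_index_iota; lia.
have memE : forall e, e \in E -> exists i j, [/\ e = (A i j, cc m f i j / 2), (i < j)%N, (j < m)%N,
     ~~ triv m i j & 0 < cc m f i j].
  move=> e /mapP [ij]; rewrite mem_filter => /andP [/andP [h1 h2] hP] ->.
  have /andP [h3 h4] := memP _ hP.
  by exists ij.1, ij.2.
exists E, lf; split; [split|].
- move=> e /memE [i [j [-> ij jm nt cpos]]] /=.
  have ij2 : (i.+1 < j)%N by move: nt; rewrite /triv negb_or => /andP [/eqP ? _]; lia.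
  split.
  + by apply/subsetP => x; rewrite inE => /andP [].
  + apply/card_gt1P; exists (sg j.-1), (sg j); split.
    * by rewrite inE sgL /= possg /inI; lia.
    * by rewrite inE sgL /= possg /inI; lia.
    * apply/negP => /eqP E1; have := congr1 pos E1; rewrite !possg; lia.
  + apply/card_gt1P; exists (sg 0), (if i == 0%N then sg m.-1 else sg i); split.
    * by rewrite !inE sgL andbT possg /inI; lia.
    * case: ifP => i0; rewrite !inE sgL andbT possg /inI; try lia.
      move: nt; rewrite /triv negb_or (eqP i0) /= => /andP [_ /eqP ?]; lia.
    * apply/negP => /eqP E1; have := congr1 pos E1; case: ifP => i0; rewrite !possg; lia.
  + apply/negP => /existsP [a /existsP [b /existsP [c /existsP [d' H]]]].
    move: H => /and5P [ab bc cd /and4P [aL bL cL dL]].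
    have pab := posmono _ _ aL bL ab; have pbc := posmono _ _ bL cL bc; have pcd := posmono _ _ cL dL cd.
    rewrite !inE aL bL cL dL /= /inI => /orP [] /and4P [h1 h2 h3 h4]; lia.
  + lra.
- move=> e e' /memE [i [j [-> ij jm nt cpos]]] /memE [i' [j' [-> ij' jm' nt' cpos']]] /=.
  have setE : forall (X : {set 'I_n}), (forall x, x \in L -> x \in X = false) -> X \subset L -> X == set0.
    move=> X hX sX; apply/eqP/setP => x; rewrite in_set0; case xL: (x \in L); first exact: hX.
    by apply/negP => xX; move: (subsetP sX x xX); rewrite xL.
  case: (boolP ((j <= i') || (j' <= i))%N) => H1.
    apply/or4P; apply: Or41; apply: setE.
    + by move=> x xL; rewrite !inE xL /= /inI; lia.
    + by apply/subsetP => x; rewrite !inE => /andP [/andP [-> _] _].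
  case: (boolP ((i <= i') && (j' <= j))%N) => H2.
    apply/or4P; apply: Or43; apply: setE.
    + by move=> x xL; rewrite !inE xL /= /inI; lia.
    + by apply/subsetP => x; rewrite !inE => /andP [_ /andP [-> _]].
  case: (boolP ((i' <= i) && (j <= j'))%N) => H3.
    apply/or4P; apply: Or42; apply: setE.
    + by move=> x xL; rewrite !inE xL /= /inI; lia.
    + by apply/subsetP => x; rewrite !inE => /andP [_ /andP [-> _]].
  exfalso; case: (ltnP i i') => H5.
  + apply: (no_cross fsym fdiag H4 (i := i) (j := j) (i' := i') (j' := j')) => //; lia.
  + apply: (no_cross fsym fdiag H4 (i := i') (j := j') (i' := i) (j' := j)) => //; lia.
- move=> a b aL bL nab.
  have pa := posm _ aL; have pb := posm _ bL.
  have npab : pos a != pos b by apply: contra nab => /eqP h; rewrite -(sgpos _ aL) -(sgpos _ bL) h.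
  have Hd : d a b = f (pos a) (pos b) by rewrite /f (negbTE npab) !sgpos.
  have HID := ID fsym fdiag npab pa pb.
  rewrite /tree_metric (negbTE nab) Hd.
  have -> : \sum_(e <- E) (if (a \in e.1) != (b \in e.1) then e.2 else 0) =
      DS m (fun i j => if keep (i, j) then (if sep i j (pos a) (pos b) then cc m f i j else 0) else 0) / 2.
    rewrite big_map big_filter big_mkcond big_allpairs_dep /DS mulr_suml; apply: eq_bigr => i _.
    rewrite mulr_suml; apply: eq_bigr => j _ /=.
    rewrite /A !inE aL bL /= /sep.
    by case: (keep (i, j)); [case: (inI i j (pos a) != inI i j (pos b))|]; rewrite ?mul0r.
  rewrite /lf -!mulrDl DS_add3.
  rewrite (_ : DS m _ = 2 * f (pos a) (pos b)); first by field.
  rewrite HID.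
  apply: DS_ext => i j ij jm.
  have hpa : (pos a < m)%N := pa.
  case: (boolP (triv m i j)) => ht.
  + rewrite /keep /= ht /= addr0 /sep /ind.
    move: ht; rewrite /triv => /orP [/eqP -> | /andP [/eqP i0 /eqP jm1]].
    * rewrite eqxx /inI.
      have e1 : forall x, (i < x <= i.+1)%N = (x == i.+1) by move=> x; apply/idP/eqP; lia.
      rewrite !e1.
      case E1 : (pos a == i.+1); case E2 : (pos b == i.+1); rewrite /= ?add0r ?addr0 //.
      by move: npab; rewrite (eqP E1) (eqP E2) eqxx.
    * rewrite i0 jm1 /inI.
      have -> : (m.-1 == 1%N) = false by apply/eqP; rewrite -Em; lia.
      have e1 : forall x, (x < m)%N -> (0 < x <= m.-1)%N = (x != 0%N) by move=> x hx; apply/idP/idP; lia.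
      rewrite !e1 //.
      case E1 : (pos a == 0%N); case E2 : (pos b == 0%N); rewrite /= ?add0r ?addr0 //.
      by move: npab; rewrite (eqP E1) (eqP E2) eqxx.
  + rewrite /keep /= ht /= add0r add0r.
    case: (ltrP 0 (cc m f i j)) => hc //.
    have hc0 := cc_ge0 fsym H4 ij jm ht.
    have -> : cc m f i j = 0 by lra.
    by case: ifP.
Qed.
End C.

Section A.
Variables (R : realType) (n : nat).

Lemma sum_enum (F : {set 'I_n} -> R) :
  \sum_J F J = \sum_(c < #|{set 'I_n}|) F (enum_val c).
Proof.
rewrite (reindex (fun c : 'I_#|{set 'I_n}| => enum_val c)) //.
by apply: onW_bij; apply: enum_val_bij.
Qed.

Lemma orth_span k (X : tensor R n) :
  (forall s, kinematic k s -> \sum_(J : {set 'I_n} | #|J| == k) s J * X J = 0) ->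
  exists w : 'I_n -> R, forall J : {set 'I_n}, #|J| = k -> X J = \sum_(i in J) w i.
Proof.
move=> H.
pose M : 'M[R]_(n, #|{set 'I_n}|) := \matrix_(i < n, c < #|{set 'I_n}|) (if (#|enum_val c| == k) && (i \in enum_val c) then 1 else 0).
pose x : 'rV[R]_(#|{set 'I_n}|) := \row_(c < #|{set 'I_n}|) (if #|enum_val c| == k then X (enum_val c) else 0).
have sub : (x <= M)%MS.
  rewrite submxE; apply/eqP/rowP => c'; rewrite !mxE.
  pose C := cokermx M.
  pose s := fun J : {set 'I_n} => C (enum_rank J) c'.
  have ks : kinematic k s.
    move=> j; rewrite big_mkcond /= sum_enum.
    have := congr1 (fun A : 'M[R]_(n, #|{set 'I_n}|) => A j c') (mulmx_coker M); rewrite !mxE => E0.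
    apply: (etrans _ E0).
    apply: eq_bigr => c _; rewrite /s enum_valK !mxE.
    by case: ifP; rewrite ?mul1r ?mul0r.
  have := H s ks; rewrite big_mkcond /= sum_enum => E0.
  apply: (etrans _ E0).
  apply: eq_bigr => c _; rewrite /s enum_valK !mxE.
  by case: ifP; rewrite ?mul0r // mulrC.
have [D HD] := submxP sub.
exists (fun i => D 0 i) => J hJ.
have := congr1 (fun A : 'rV[R]_(#|{set 'I_n}|) => A 0 (enum_rank J)) HD; rewrite !mxE enum_rankK hJ eqxx => ->.
rewrite (bigID (fun i => i \in J)) /= [X in _ + X]big1 ?addr0.
  by apply: eq_bigr => i iJ; rewrite !mxE enum_rankK hJ eqxx iJ mulr1.
by move=> i iJ; rewrite !mxE enum_rankK hJ eqxx (negbTE iJ) mulr0.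
Qed.

End A.

Section D.
Variables (R : realType) (n : nat).

Definition comp (X : tensor R n) : tensor R n := fun K => X (~: K).

Lemma card_setC (S : {set 'I_n}) : #|~: S| = (n - #|S|)%N.
Proof. by have := cardsC S; rewrite card_ord; lia. Qed.

Lemma compl_pair (a b c d : 'I_n) (S T : {set 'I_n}) :
  (forall x, (x \in T) = [&& x != a, x != b, x != c, x != d & x \notin S]) ->
  c \notin S -> d \notin S -> c != a -> c != b -> d != a -> d != b ->
  ~: (a |: (b |: S)) = c |: (d |: T).
Proof.
move=> hT cS dS ca cb da db; apply/setP => x; rewrite !inE hT.
case: (eqVneq x c) => [->|xc]; first by rewrite (negbTE ca) (negbTE cb) (negbTE cS).
case: (eqVneq x d) => [->|xd]; first by rewrite (negbTE da) (negbTE db) (negbTE dS).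
by case: (x == a); case: (x == b); case: (x \in S).
Qed.

Lemma arr_dual k1 k2 (pi : tensor R n) : (k1 + k2 = n)%N -> (2 <= k1)%N -> (2 <= k2)%N ->
  is_array k1 pi -> is_array k2 (comp pi).
Proof.
move=> hn h1 h2 [_ [D [HD Hpi]]].
split; first by apply/andP; split => //; lia.
exists (fun S a b => pi (~: (a |: (b |: S)))); split; last by [].
move=> S hS.
apply: fp_tree.
- by rewrite card_setC hS; lia.
- by move=> a b _ _; rewrite setUCA.
- move=> p q r s pq qr rs pL qL rL sL.
  rewrite !inE in pL qL rL sL.
  have ne : forall x y : 'I_n, (x < y)%N -> x != y by move=> x y h; apply/eqP => E; move: h; rewrite E ltnn.
  have npq := ne _ _ pq; have nqr := ne _ _ qr; have nrs := ne _ _ rs.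
  have npr : p != r by apply: ne; lia.
  have nqs : q != s by apply: ne; lia.
  have nps : p != s by apply: ne; lia.
  set T := ~: (p |: (q |: (r |: (s |: S)))).
  have hT : forall x, (x \in T) = [&& x != p, x != q, x != r, x != s & x \notin S].
    by move=> x; rewrite !inE !negb_or.
  have cT : #|T| = (k1 - 2)%N.
    rewrite card_setC !cardsU1 !inE hS (negbTE sL) (negbTE rL) (negbTE qL) (negbTE pL).
    rewrite (negbTE nrs) (negbTE nqr) (negbTE nqs) (negbTE npq) (negbTE npr) (negbTE nps) /=; lia.
  have [E [lf [HV Hm]]] := HD T cT.
  have mT : forall x, x \in [:: p; q; r; s] -> x \in ~: T.
    move=> x hx; rewrite in_setC hT; move: hx; rewrite !inE.
    by move=> /or4P [] /eqP ->; rewrite eqxx /= ?andbF.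
  have nT : forall x, x \in [:: p; q; r; s] -> x \notin T by move=> x /mT; rewrite inE.
  have pP : p \in [:: p; q; r; s] by rewrite !inE eqxx.
  have qP : q \in [:: p; q; r; s] by rewrite !inE eqxx ?orbT.
  have rP : r \in [:: p; q; r; s] by rewrite !inE eqxx ?orbT.
  have sP : s \in [:: p; q; r; s] by rewrite !inE eqxx ?orbT.
  have fpT := tree_fp HV Hm pq qr rs (mT p pP) (mT q qP) (mT r rP) (mT s sP).
  have Ep : forall a b c d : 'I_n,
     (forall x, (x \in T) = [&& x != a, x != b, x != c, x != d & x \notin S]) ->
     c \notin S -> d \notin S -> c != a -> c != b -> d != a -> d != b -> c != d ->
     pi (~: (a |: (b |: S))) = D T c d.
    move=> a b c d hT' cS dS ca cb da db cd.
    have cnT : c \notin T by rewrite hT' eqxx /= !andbF.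
    have dnT : d \notin T by rewrite hT' eqxx /= !andbF.
    by rewrite (compl_pair hT') // Hpi.
  have brute : forall a b c d : 'I_n,
     (forall x, [&& x != p, x != q, x != r, x != s & x \notin S] = [&& x != a, x != b, x != c, x != d & x \notin S]) ->
     (forall x, (x \in T) = [&& x != a, x != b, x != c, x != d & x \notin S]).
    by move=> a b c d h x; rewrite hT h.
  have nqp : q != p by rewrite eq_sym.
  have nrq : r != q by rewrite eq_sym.
  have nsr : s != r by rewrite eq_sym.
  have nrp : r != p by rewrite eq_sym.
  have nsq : s != q by rewrite eq_sym.
  have nsp : s != p by rewrite eq_sym.
  have t1 := brute p r q s (fun x => ltac:(by case: (x == p); case: (x == q); case: (x == r); case: (x == s))).
  have t2 := brute q s p r (fun x => ltac:(by case: (x == p); case: (x == q); case: (x == r); case: (x == s))).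
  have t3 := brute p q r s (fun x => ltac:(by case: (x == p); case: (x == q); case: (x == r); case: (x == s))).
  have t4 := brute r s p q (fun x => ltac:(by case: (x == p); case: (x == q); case: (x == r); case: (x == s))).
  have t5 := brute p s q r (fun x => ltac:(by case: (x == p); case: (x == q); case: (x == r); case: (x == s))).
  have t6 := brute q r p s (fun x => ltac:(by case: (x == p); case: (x == q); case: (x == r); case: (x == s))).
  rewrite /fp (Ep _ _ _ _ t1 qL sL nqp nqr nsp nsr nqs).
  rewrite (Ep _ _ _ _ t2 pL rL npq nps nrq nrs npr).
  rewrite (Ep _ _ _ _ t3 rL sL nrp nrq nsp nsq nrs).
  rewrite (Ep _ _ _ _ t4 pL qL npr nps nqr nqs npq).
  rewrite (Ep _ _ _ _ t5 qL rL nqp nqs nrp nrs nqr).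
  rewrite (Ep _ _ _ _ t6 pL sL npq npr nsq nsr nps).
  move: fpT; rewrite /fp /fourpt.
  by rewrite [D T r s + _]addrC [D T q s + _]addrC [D T q r + _]addrC.
Qed.
End D.

Section M.
Variables (R : realType) (n : nat).
Implicit Types (X Y U V W : tensor R n).

Lemma eqv_refl k X : array_equiv k X X.
Proof. by exists (fun=> 0) => J _; rewrite big1 ?addr0. Qed.

Lemma eqv_sym k X Y : array_equiv k X Y -> array_equiv k Y X.
Proof.
move=> [w hw]; exists (fun i => - w i) => J hJ; rewrite hw // sumrN; ring.
Qed.

Lemma eqv_trans k X Y U : array_equiv k X Y -> array_equiv k Y U -> array_equiv k X U.
Proof.
move=> [w hw] [w' hw']; exists (fun i => w i + w' i) => J hJ.
by rewrite hw' // hw // big_split /=; ring.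
Qed.

Lemma eqv_ext k X X' Y Y' : (forall J : {set 'I_n}, #|J| = k -> X J = X' J) -> (forall J : {set 'I_n}, #|J| = k -> Y J = Y' J) ->
  array_equiv k X Y -> array_equiv k X' Y'.
Proof.
move=> hX hY [w hw]; exists w => J hJ; rewrite -hX // -hY //; exact: hw.
Qed.

Lemma eqv_lin k (x y : R) X1 Y1 X2 Y2 : array_equiv k X1 Y1 -> array_equiv k X2 Y2 ->
  array_equiv k (fun J => x * X1 J + y * X2 J) (fun J => x * Y1 J + y * Y2 J).
Proof.
move=> [w hw] [w' hw']; exists (fun i => x * w i + y * w' i) => J hJ.
by rewrite hw // hw' // big_split /= -!mulr_sumr; ring.
Qed.

Lemma card_compl (K : {set 'I_n}) : #|~: K| = (n - #|K|)%N.
Proof. by have := cardsC K; rewrite card_ord; lia. Qed.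

Lemma eqv_comp k1 k2 X Y : (k1 + k2 = n)%N -> (0 < k2)%N ->
  array_equiv k1 X Y -> array_equiv k2 (comp X) (comp Y).
Proof.
move=> hn h2 [w hw].
pose c := \sum_i w i.
exists (fun i => c / k2%:R - w i) => K hK.
rewrite /comp hw; last by rewrite card_compl hK; lia.
rewrite sumrB sumr_const hK.
have hc : c = \sum_(i in ~: K) w i + \sum_(i in K) w i.
  rewrite /c (bigID (fun i => i \in K)) /= addrC; congr (_ + _).
  by apply: eq_bigl => i; rewrite inE.
have k2n0 : (k2%:R : R) != 0 by rewrite pnatr_eq0; lia.
by rewrite -mulr_natr hc; field.
Qed.

Lemma sum_compl (G : {set 'I_n} -> R) k : (k <= n)%N ->
  \sum_(K : {set 'I_n} | #|K| == (n - k)%N) G K = \sum_(J : {set 'I_n} | #|J| == k) G (~: J).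
Proof.
move=> hk; rewrite (reindex_inj (@setC_inj _)) /=; apply: eq_bigl => J.
rewrite card_compl; have := max_card J; rewrite card_ord => hJ.
by apply/idP/idP => /eqP h; apply/eqP; move: h; change ((n - #|J|)%N = (n - k)%N -> #|J| = k) || change (#|J| = k -> (n - #|J|)%N = (n - k)%N); lia.
Qed.

Lemma dual_eqv k V W : (k <= n)%N -> dual_array k V W -> array_equiv k (comp W) V.
Proof.
move=> hk hd.
have [w hw] : exists w : 'I_n -> R, forall J : {set 'I_n}, #|J| = k ->
    (fun J => V J - W (~: J)) J = \sum_(i in J) w i.
  apply: orth_span => s ks.
  rewrite (eq_bigr (fun J => s J * V J - s J * W (~: J))); last by move=> J _; rewrite mulrBr.
  rewrite sumrB hd // sum_compl //.
  by apply/eqP; rewrite subr_eq0; apply/eqP; apply: eq_bigr => J _; rewrite setCK.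
exists w => J hJ; have := hw J hJ; rewrite /comp /= => <-; ring.
Qed.

Lemma dual_of_comp k W : (k <= n)%N -> dual_array k (comp W) W.
Proof.
move=> hk s _; rewrite sum_compl //; apply: eq_bigr => J _; by rewrite setCK.
Qed.

Lemma one_param_comp k1 k2 W : (k1 + k2 = n)%N -> (2 <= k1)%N -> (2 <= k2)%N ->
  one_param k1 W -> one_param k2 (comp W).
Proof.
move=> hn h1 h2 hW x hx; exact: (arr_dual (pi := fun J => x * W J) hn h1 h2 (hW x hx)).
Qed.

Lemma compat_sym k V W : compatible_arrays k V W -> compatible_arrays k W V.
Proof.
move=> h x y hx hy; have [pi [hp he]] := h y x hy hx; exists pi; split => //.
by apply: eqv_ext he => // J _; rewrite addrC.
Qed.

Lemma compat_transfer k1 k2 W1 W2 U1 U2 : (k1 + k2 = n)%N -> (2 <= k1)%N -> (2 <= k2)%N ->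
  compatible_arrays k2 W1 W2 -> array_equiv k1 (comp W1) U1 -> array_equiv k1 (comp W2) U2 ->
  compatible_arrays k1 U1 U2.
Proof.
move=> hn h1 h2 hc e1 e2 x y hx hy.
have [pi [hp he]] := hc x y hx hy.
exists (comp pi); split.
  by apply: (arr_dual _ h2 h1 hp); rewrite addnC.
apply: eqv_trans (_ : array_equiv k1 _ (fun J => x * comp W1 J + y * comp W2 J)) _.
  by apply: eqv_lin; apply: eqv_sym.
apply: (eqv_comp (k1 := k2) (k2 := k1) (X := fun J => x * W1 J + y * W2 J)) => //; first by rewrite addnC.
lia.
Qed.

End M.

Theorem theorem3p2 (R : realType) (n k : nat) (Hk2 : (2 <= k)%N) (Hkn : (k < n)%N)
  (C : tensor R n -> Prop) :
  max_clique k C ->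
  (forall V, C V -> exists W, one_param (n - k) W /\ dual_array k V W) ->
  max_clique (n - k)
    (fun W : tensor R n => one_param (n - k) W /\ exists V, C V /\ dual_array k V W).
Proof.
move=> [[Cop Ccomp] Cmax] Hdual.
have hkn : (k <= n)%N by lia.
case: (ltnP (n - k) 2) => hnk.
  have nope : forall W : tensor R n, ~ one_param (n - k) W.
    by move=> W h; have [hh _] := h 1 ltr01; lia.
  split; first split.
  - by move=> V [].
  - by move=> V W [hV _]; exfalso; exact: (nope _ hV).
  - by move=> C' [C'op _] _ V hV; exfalso; exact: (nope _ (C'op V hV)).
have hn : (k + (n - k) = n)%N by lia.
have hn' : ((n - k) + k = n)%N by lia.
split; first split.
- by move=> V [].
- move=> W1 W2 [o1 [V1 [CV1 d1]]] [o2 [V2 [CV2 d2]]].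
  apply: (compat_transfer hn' hnk Hk2 (Ccomp _ _ CV1 CV2)).
  + apply: eqv_sym; apply: (eqv_ext (X := comp (comp W1)) (Y := comp V1)) => //.
      by move=> J _; rewrite /comp setCK.
    apply: (eqv_comp hn); first lia.
    exact: dual_eqv.
  + apply: eqv_sym; apply: (eqv_ext (X := comp (comp W2)) (Y := comp V2)) => //.
      by move=> J _; rewrite /comp setCK.
    apply: (eqv_comp hn); first lia.
    exact: dual_eqv.
- move=> C' [C'op C'comp] sub W C'W.
  split; first exact: C'op.
  exists (comp W); split; last exact: dual_of_comp.
  pose C'' := fun U : tensor R n => C U \/ exists W', C' W' /\ U = comp W'.
  apply: (Cmax C''); last by right; exists W.
  + split.
    * move=> U [hU | [W' [hW' ->]]]; first exact: Cop.
      exact: (one_param_comp hn' hnk Hk2 (C'op _ hW')).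
    * have mixed : forall U1 W2, C U1 -> C' W2 -> compatible_arrays k U1 (comp W2).
        move=> U1 W2 hU1 hW2.
        have [W1 [o1 d1]] := Hdual U1 hU1.
        have C'W1 : C' W1 by apply: sub; split => //; exists U1.
        apply: (compat_transfer hn Hk2 hnk (C'comp _ _ C'W1 hW2)).
        - exact: dual_eqv.
        - exact: eqv_refl.
      move=> U1 U2 [h1 | [W1 [hW1 ->]]] [h2 | [W2 [hW2 ->]]].
      - exact: Ccomp.
      - exact: mixed.
      - apply: compat_sym; exact: mixed.
      - apply: (compat_transfer hn Hk2 hnk (C'comp _ _ hW1 hW2)); exact: eqv_refl.
  + by move=> V hV; left.
Qed.
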